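(* Let $\mathbf X_1,\mathbf X_2,\dots$ be $\mathbb R^d$-valued random vectors, $d\ge2$, with common d.f. $F$ having continuous univariate margins $F^{[1]},\dots,F^{[d]}$ and (unique) copula $C$, with associated measure $\nu_C$ on $[0,1]^d$. Fix an integer $r\ge1$ and $\kappa>1$, let $\Pi=\{(j_1/(r+1),\dots,j_d/(r+1)):j_1,\dots,j_d\in\{1,\dots,r\}\}$, $\mathbf s=(1/(r+1),\dots,1/(r+1))$, and define $$\Pi_m=\Big\{\boldsymbol\pi\in\Pi:\nu_m((\boldsymbol\pi-\mathbf s,\boldsymbol\pi])>\tfrac{1}{\kappa(r+1)^d}\Big\},\qquad \Pi_C=\Big\{\boldsymbol\pi\in\Pi:\nu_C((\boldsymbol\pi-\mathbf s,\boldsymbol\pi])>\tfrac{1}{\kappa(r+1)^d}\Big\},$$ where $\nu_m$ is the empirical measure of the pseudo-observations $\hat{\mathbf U}_i=\frac{m}{m+1}(F_{1:m}^{[1]}(X_i^{[1]}),\dots,F_{1:m}^{[d]}(X_i^{[d]}))$, $i=1,\dots,m$. Assume that (i) $\nu_C((\boldsymbol\pi-\mathbf s,\boldsymbol\pi])\ne1/(\kappa(r+1)^d)$ for each $\boldsymbol\pi\in\Pi$, and (ii) $\sup_{\mathbf u\in[0,1]^d}|C_m(\mathbf u)-C(\mathbf u)|\to0$ almost surely as $m\to\infty$. Then, almost surely, $\Pi_m=\Pi_C$ for all $m$ sufficiently large.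
   Context: $F_{1:m}^{[\ell]}$ is the empirical d.f. of $X_1^{[\ell]},\dots,X_m^{[\ell]}$ (the $\ell$th coordinates). The empirical copula $C_m$ is the empirical d.f. of $\hat{\mathbf U}_1,\dots,\hat{\mathbf U}_m$. For $\mathbf a<\mathbf b$ in $[0,1]^d$, $(\mathbf a,\mathbf b]=\{\mathbf u\in[0,1]^d:\mathbf a<\mathbf u\le\mathbf b\}$ (componentwise inequalities). The copula $C$ satisfies $F(\mathbf x)=C(F^{[1]}(x^{[1]}),\dots,F^{[d]}(x^{[d]}))$. *)

(* Defs.v *)
From HB Require Import structures.
From mathcomp Require Import all_boot all_order all_algebra.
From mathcomp Require Import all_classical all_reals all_analysis.
Set Implicit Arguments. Unset Strict Implicit. Unset Printing Implicit Defensive.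
Import Order.TTheory GRing.Theory Num.Theory.
Local Open Scope ring_scope.
Local Open Scope classical_set_scope.

Section Defs.
Variables (R : realType) (d : nat).

Definition in_cube (u : 'I_d -> R) : Prop := forall l, 0 <= u l <= 1.

(* C-volume of the box (a,b]: the measure nu_C((a,b]) induced by the d.f. C *)
Definition cvolume (C : ('I_d -> R) -> R) (a b : 'I_d -> R) : R :=
  \sum_(e : {ffun 'I_d -> bool})
     (-1) ^+ #|[pred l | ~~ e l]| * C (fun l => if e l then b l else a l).

Definition is_copula (C : ('I_d -> R) -> R) : Prop :=
  [/\ (forall u, in_cube u -> (exists l, u l = 0) -> C u = 0),
      (forall u l, in_cube u -> (forall k, k != l -> u k = 1) -> C u = u l) &
      (forall a b, in_cube a -> in_cube b -> (forall l, a l <= b l) ->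
         0 <= cvolume C a b)].

Variables (T : Type) (X : nat -> 'I_d -> T -> R).

(* empirical d.f. F_{1:m}^{[l]} of X_1^{[l]},...,X_m^{[l]} (indices 0..m-1) *)
Definition emp_margin (w : T) (m : nat) (l : 'I_d) (t : R) : R :=
  (#|[set i : 'I_m | X i l w <= t]|)%:R / m%:R.

Definition pseudo_obs (w : T) (m : nat) (i : nat) (l : 'I_d) : R :=
  m%:R / (m.+1)%:R * emp_margin w m l (X i l w).

Definition emp_copula (w : T) (m : nat) (u : 'I_d -> R) : R :=
  (#|[set i : 'I_m | [forall l, pseudo_obs w m i l <= u l]]|)%:R / m%:R.

Definition emp_measure_box (w : T) (m : nat) (a b : 'I_d -> R) : R :=
  (#|[set i : 'I_m |
       [forall l, (a l < pseudo_obs w m i l) && (pseudo_obs w m i l <= b l)]]|)%:R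
  / m%:R.

End Defs.

Definition grid (R : realType) (d r : nat) : set ('I_d -> R) :=
  [set p | exists j : 'I_d -> nat,
     (forall l, (1 <= j l <= r)%N) /\ p = (fun l => (j l)%:R / (r.+1)%:R)].

Definition shift_down (R : realType) (d r : nat) (p : 'I_d -> R) : 'I_d -> R :=
  fun l => p l - 1 / (r.+1)%:R.

Definition threshold (R : realType) (d r : nat) (kappa : R) : R :=
  1 / (kappa * (r.+1)%:R ^+ d).

Definition Pi_m (R : realType) (d r : nat) (kappa : R) (T : Type)
  (X : nat -> 'I_d -> T -> R) (w : T) (m : nat) : set ('I_d -> R) :=
  [set p | @grid R d r p /\
     @threshold R d r kappa < emp_measure_box X w m (@shift_down R d r p) p].

Definition Pi_C (R : realType) (d r : nat) (kappa : R)
  (C : ('I_d -> R) -> R) : set ('I_d -> R) :=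
  [set p | @grid R d r p /\ @threshold R d r kappa < cvolume C (@shift_down R d r p) p].

(* Main.v *)
Require Import Defs.
From HB Require Import structures.
From mathcomp Require Import all_boot all_order all_algebra.
From mathcomp Require Import all_classical all_reals all_analysis.
From mathcomp Require Import lra.
Import numFieldNormedType.Exports.
Import Order.TTheory GRing.Theory Num.Theory.
Local Open Scope ring_scope.
Local Open Scope classical_set_scope.

Lemma card_sum (R : realType) m (Q : pred 'I_m) :
  (#|[set i : 'I_m | Q i]|)%:R = \sum_(i < m) ((Q i)%:R : R).
Proof.
rewrite -sum1_card natr_sum big_mkcond /=; apply: eq_bigr => i _; case: ifPn => [/set_mem h|h]; case: (boolP (Q i)) => // q; exfalso.
  exact: (negP q).
apply: (negP h); exact: mem_set.
Qed.

Lemma forall_prod (R : realType) d (Q : pred 'I_d) :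
  ([forall l, Q l])%:R = \prod_l ((Q l)%:R : R).
Proof.
case: (boolP [forall l, Q l]) => [/forallP H|]; last rewrite negb_forall => /existsP [l Hl].
  by rewrite big1 // => l _; rewrite H.
by rewrite (bigD1 l) //= (negbTE Hl) mul0r.
Qed.

Lemma point_ie (R : realType) d (a b x : 'I_d -> R) :
  (forall l, a l <= b l) ->
  (([forall l, (a l < x l) && (x l <= b l)])%:R : R) =
  \sum_(e : {ffun 'I_d -> bool}) (-1) ^+ #|[pred l | ~~ e l]| *
     ([forall l, x l <= (if e l then b l else a l)])%:R.
Proof.
move=> hab; rewrite forall_prod.
transitivity (\prod_l \sum_(c : bool) (if c then ((x l <= b l)%R%:R : R) else - (x l <= a l)%R%:R)).
  apply: eq_bigr => l _; rewrite big_bool /=.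
  have := hab l; case: (ltrP (a l) (x l)) => h1 h2 /=.
    by rewrite subr0.
  by rewrite (le_trans h1 h2) subrr.
rewrite bigA_distr_bigA /=; apply: eq_bigr => e _.
rewrite forall_prod.
transitivity (\prod_l ((-1) ^+ (~~ e l) * ((x l <= (if e l then b l else a l))%R%:R : R))).
  by apply: eq_bigr => l _; case: (e l); rewrite /= ?mul1r ?mulN1r.
rewrite big_split /=; congr (_ * _).
rewrite -prodr_const (big_mkcond (fun l => ~~ e l)) /=.
by apply: eq_bigr => l _; case: (e l).
Qed.

Lemma box_ie (R : realType) d T (X : nat -> 'I_d -> T -> R) w m (a b : 'I_d -> R) :
  (forall l, a l <= b l) ->
  emp_measure_box X w m a b = cvolume (emp_copula X w m) a b.
Proof.
move=> hab; rewrite /emp_measure_box /cvolume /emp_copula card_sum.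
under eq_bigr do rewrite (@point_ie R d a b _ hab).
rewrite exchange_big mulr_suml; apply: eq_bigr => e _.
by rewrite card_sum -mulr_sumr mulrA.
Qed.

Lemma cvol_diff (R : realType) d (C1 C2 : ('I_d -> R) -> R) a b :
  `|cvolume C1 a b - cvolume C2 a b| <=
  \sum_(e : {ffun 'I_d -> bool}) `|C1 (fun l => if e l then b l else a l) - C2 (fun l => if e l then b l else a l)|.
Proof.
rewrite /cvolume -sumrB; apply: le_trans (ler_norm_sum _ _ _) _.
apply: ler_sum => e _; rewrite -mulrBr normrM normrX normrN normr1 expr1n mul1r.
by [].
Qed.

Lemma cmp_lemma (R : realType) (x y t : R) :
  `|x - y| < `|y - t| -> (t < x) = (t < y).
Proof.
move=> h; case: (ltgtP t y) => hty.
- have e : `|y - t| = y - t by apply: gtr0_norm; rewrite subr_gt0.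
  move: h; rewrite e ltr_norml => /andP [h1 h2].
  by apply/idP; lra.
- have e : `|y - t| = - (y - t) by apply: ltr0_norm; rewrite subr_lt0.
  move: h; rewrite e ltr_norml => /andP [h1 h2].
  by apply/negbTE; rewrite -leNgt; lra.
- by rewrite hty subrr normr0 normr_lt0 in h.
Qed.

Lemma corner_cube (R : realType) d r (j : 'I_d -> nat) (e : {ffun 'I_d -> bool}) :
  (forall l, (1 <= j l <= r)%N) ->
  in_cube (fun l => if e l then (j l)%:R / (r.+1)%:R
                    else @shift_down R d r (fun l => (j l)%:R / (r.+1)%:R) l).
Proof.
move=> hj l; rewrite /shift_down.
have /andP [j1 j2] := hj l.
have q0 : (0 : R) < (r.+1)%:R by rewrite ltr0n.
have h1 : (1 : R) <= (j l)%:R by rewrite ler1n.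
have h2 : (j l)%:R + 1 <= (r.+1)%:R :> R by rewrite natr1 ler_nat ltnS.
have A : 0 <= (j l)%:R / (r.+1)%:R - 1 / (r.+1)%:R :> R.
  by rewrite -mulrBl divr_ge0 ?subr_ge0 // ltW.
have B : (j l)%:R / (r.+1)%:R <= 1 :> R.
  by rewrite ler_pdivrMr // mul1r; lra.
have C : 0 <= 1 / (r.+1)%:R :> R by rewrite divr_ge0 // ltW.
case: (e l) => /=; apply/andP; split => //.
all: by apply: le_trans _ B; rewrite gerBl.
Qed.

Lemma det_main (R : realType) d r (kappa : R) T (X : nat -> 'I_d -> T -> R) w
  (C : ('I_d -> R) -> R) :
  (forall p, @grid R d r p -> cvolume C (@shift_down R d r p) p != @threshold R d r kappa) ->
  (forall e : R, 0 < e -> exists M : nat, forall m : nat,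
      (M <= m)%N -> forall u, in_cube u -> `|emp_copula X w m u - C u| < e) ->
  exists M : nat, forall m : nat,
      (M <= m)%N -> @Pi_m R d r kappa T X w m = @Pi_C R d r kappa C.
Proof.
move=> Hne Hconv.
have step : forall p, exists M : nat, @grid R d r p -> forall m, (M <= m)%N ->
   (@threshold R d r kappa < emp_measure_box X w m (@shift_down R d r p) p) =
   (@threshold R d r kappa < cvolume C (@shift_down R d r p) p).
  move=> p; case: (pselect (@grid R d r p)) => gp; last by exists 0%N.
  have dpos : 0 < `|cvolume C (@shift_down R d r p) p - @threshold R d r kappa|.
    by rewrite normr_gt0 subr_eq0; apply: Hne.
  set delta := `|_ - _| in dpos *.
  set N := (#|{ffun 'I_d -> bool}|)%:R : R.
  have hN : 0 < N + 1 by rewrite ltr_wpDl ?ler0n.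
  have [M HM] := Hconv (delta / (N + 1)) (divr_gt0 dpos hN).
  exists M => _ m hm; apply: cmp_lemma.
  rewrite box_ie; last by move=> l; rewrite /shift_down gerBl divr_ge0 ?ler0n.
  apply: le_lt_trans (cvol_diff _ _ _ _ _ _) _.
  apply: (@le_lt_trans _ _ (\sum_(e : {ffun 'I_d -> bool}) (delta / (N + 1)))).
    apply: ler_sum => e _; apply/ltW/HM => //.
    have [j [hj ep]] := gp; rewrite ep; exact: corner_cube.
  rewrite sumr_const -mulr_natl -/N mulrA ltr_pdivrMr //.
  by rewrite mulrDr mulr1 [N * _]mulrC ltrDl.
have [f hf] := choice step.
exists (\big[maxn/0%N]_(g : {ffun 'I_d -> 'I_r.+1}) f (fun l => ((g l : nat)%:R / (r.+1)%:R))).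
move=> m hm.
have key : forall p, @grid R d r p ->
   (@threshold R d r kappa < emp_measure_box X w m (@shift_down R d r p) p) =
   (@threshold R d r kappa < cvolume C (@shift_down R d r p) p).
  move=> p gp; apply: (hf p gp); apply: leq_trans hm.
  have [j [hj ep]] := gp.
  pose g : {ffun 'I_d -> 'I_r.+1} := [ffun l => inord (j l)].
  have -> : f p = f (fun l => ((g l : nat)%:R / (r.+1)%:R)).
    congr f; rewrite ep; apply: funext => l; rewrite /g ffunE inordK //.
    by rewrite ltnS; case/andP: (hj l).
  have := @leq_bigmax _ (fun g0 : {ffun 'I_d -> 'I_r.+1} => f (fun l : 'I_d => ((g0 l : nat)%:R / (r.+1)%:R : R))) g.
  move=> h; exact h.
apply/seteqP; split => p [gp hp]; split => //.
  by rewrite -key.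
by rewrite key.
Qed.

Theorem proposition3p1
  (dT : measure_display) (T : measurableType dT) (R : realType)
  (P : probability T R) (d : nat) (X : nat -> 'I_d -> T -> R)
  (F : ('I_d -> R) -> R) (Fm : 'I_d -> R -> R) (C : ('I_d -> R) -> R)
  (r : nat) (kappa : R) :
  (2 <= d)%N ->
  (forall i l, measurable_fun setT (X i l)) ->
  (forall i x, fine (P [set w | forall l, X i l w <= x l]) = F x) ->
  (forall i l t, fine (P [set w | X i l w <= t]) = Fm l t) ->
  (forall l, continuous (Fm l : R -> R)) ->
  is_copula C ->
  (forall x, F x = C (fun l => Fm l (x l))) ->
  (1 <= r)%N -> 1 < kappa ->
  (forall p, @grid R d r p -> cvolume C (@shift_down R d r p) p != @threshold R d r kappa) ->
  {ae P, forall w, forall e : R, 0 < e -> exists M : nat, forall m : nat,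
      (M <= m)%N -> forall u, in_cube u -> `|emp_copula X w m u - C u| < e} ->
  {ae P, forall w, exists M : nat, forall m : nat,
      (M <= m)%N -> @Pi_m R d r kappa T X w m = @Pi_C R d r kappa C}.
Proof.
move=> _ _ _ _ _ _ _ _ _ Hne Hae.
apply: filterS Hae => w Hw.
exact: det_main.
Qed.
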